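(* Let $Q$ be the quiver with one vertex $e$ and one loop $a$, let $Z=\{a^m\}$ with $m\ge2$ such that the characteristic $p$ of $k$ divides $m$, and let $\Lambda=kQ/\langle Z\rangle$. The following are equivalent: (i) the Lie algebra $\operatorname{H}^1(\Lambda,\Lambda)$ is simple; (ii) $\operatorname{H}^1(\Lambda,\Lambda)$ is semisimple; (iii) $m=p$ and $p>2$; (iv) $\operatorname{H}^1(\Lambda,\Lambda)$ is isomorphic to the Witt Lie algebra $W(1,1):=\operatorname{Der}(k[X]/(X^p))$ and $p>2$.
   Context: $k$ is an algebraically closed field of characteristic $p>0$. $\operatorname{H}^1(\Lambda,\Lambda)=\operatorname{Der}_k(\Lambda)/\operatorname{Ad}_k(\Lambda)$ is the Lie algebra of derivations modulo inner derivations (commutator bracket). A Lie algebra is semisimple if its solvable radical is zero. *)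

(* Defs.v *)
From HB Require Import structures.
From mathcomp Require Import all_boot all_order all_algebra.
Set Implicit Arguments. Unset Strict Implicit. Unset Printing Implicit Defensive.
Import GRing.Theory.
Local Open Scope ring_scope.

(* ---------- Generic Lie-algebra notions, for a quotient Lie algebra D / A
   where D is a Lie subalgebra of an ambient Lie algebra (V, br) and A is an
   ideal of D.  Subspaces of D/A are identified with subspaces I of V with
   A <= I <= D (correspondence theorem). ---------- *)
Section LieQuot.
Variables (K : fieldType) (V : lmodType K) (br : V -> V -> V).

Definition subsp (S : V -> Prop) : Prop :=
  S 0 /\ forall (a : K) (u v : V), S u -> S v -> S (a *: u + v).

Definition incl (S T : V -> Prop) : Prop := forall x, S x -> T x.

Definition brsp (I J : V -> Prop) : V -> Prop :=
  fun x => forall S, subsp S -> (forall u v, I u -> J v -> S (br u v)) -> S x.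

Definition addsp (I J : V -> Prop) : V -> Prop :=
  fun x => exists u v, [/\ I u, J v & x = u + v].

Definition qideal (D A I : V -> Prop) : Prop :=
  [/\ subsp I, incl A I, incl I D & incl (brsp D I) I].

Fixpoint qderived (A I : V -> Prop) (n : nat) : V -> Prop :=
  if n is n'.+1 then addsp (brsp (qderived A I n') (qderived A I n')) A
  else I.

Definition qsolvable (A I : V -> Prop) : Prop :=
  exists n, incl (qderived A I n) A.

(* D / A is semisimple: its solvable radical (the sum of all solvable
   ideals) is zero, i.e. every solvable ideal is zero *)
Definition qsemisimple (D A : V -> Prop) : Prop :=
  forall I, qideal D A I -> qsolvable A I -> incl I A.

Definition qsimple (D A : V -> Prop) : Prop :=
  ~ incl (brsp D D) A /\
  forall I, qideal D A I -> incl I A \/ incl D I.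

End LieQuot.

(* Isomorphism of Lie algebras D1/A1 ~= D2/A2: a linear map inducing a
   bijective bracket-preserving map on the quotients. *)
Definition qiso (K : fieldType) (V1 V2 : lmodType K)
  (br1 : V1 -> V1 -> V1) (D1 A1 : V1 -> Prop)
  (br2 : V2 -> V2 -> V2) (D2 A2 : V2 -> Prop) : Prop :=
  exists f : {linear V1 -> V2},
  [/\ forall u, D1 u -> D2 (f u),
      forall u, D1 u -> (A2 (f u) <-> A1 u),
      forall w, D2 w -> exists u, D1 u /\ A2 (f u - w) &
      forall u v, D1 u -> D1 v -> A2 (f (br1 u v) - br2 (f u) (f v))].

(* ---------- The truncated polynomial algebra Lambda = k[a]/(a^m) =
   kQ/<a^m>, for Q the one-loop quiver, in the monomial basis
   1, a, ..., a^(m-1): elements are column vectors 'cV[k]_m. ---------- *)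
Section Trunc.
Variables (k : fieldType) (m : nat).

Definition lam_poly (u : 'cV[k]_m) : {poly k} := \sum_(i < m) u i 0 *: 'X^i.
Definition lam_of (q : {poly k}) : 'cV[k]_m := \col_(i < m) (q %% 'X^m)`_i.

Definition lam_mul (u v : 'cV[k]_m) : 'cV[k]_m := lam_of (lam_poly u * lam_poly v).

Definition gl_br (D E : 'M[k]_m) : 'M[k]_m := D *m E - E *m D.

Definition Der (D : 'M[k]_m) : Prop :=
  forall u v, D *m lam_mul u v = lam_mul (D *m u) v + lam_mul u (D *m v).

Definition Ad (D : 'M[k]_m) : Prop :=
  exists x, forall u, D *m u = lam_mul x u - lam_mul u x.

Definition zerosp (D : 'M[k]_m) : Prop := D = 0.
End Trunc.

(* Main.v *)
Require Import Defs.
From HB Require Import structures.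
From mathcomp Require Import all_boot all_order all_algebra.
From mathcomp Require Import ring zify.
From Stdlib Require Import Classical.
Set Implicit Arguments. Unset Strict Implicit. Unset Printing Implicit Defensive.
Import GRing.Theory.
Local Open Scope ring_scope.


Section Base.
Variables (k : fieldType) (n : nat).
Local Notation m := n.+1.
Implicit Types (q r : {poly k}) (u v : 'cV[k]_m).
Local Notation lp := (@lam_poly k m).
Local Notation lo := (@lam_of k m).

Lemma Xm_neq0 : 'X^m != 0 :> {poly k}.
Proof. by rewrite -size_poly_eq0 size_polyXn. Qed.

Lemma lpE u : lp u = \poly_(i < m) u (inord i) 0.
Proof. by rewrite poly_def; apply: eq_bigr => i _; rewrite inord_val. Qed.

Lemma size_lp u : (size (lp u) <= m)%N.
Proof. by rewrite lpE size_poly. Qed.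

Lemma size_modXm q : (size (modp q 'X^m) <= m)%N.
Proof. by have := ltn_modpN0 q Xm_neq0; rewrite size_polyXn. Qed.

Lemma lpK q : lp (lo q) = q %% 'X^m.
Proof.
apply/polyP => i; rewrite lpE coef_poly.
case: ifP => him; first by rewrite mxE inordK.
rewrite nth_default //; apply: leq_trans (size_modXm q) _; by rewrite leqNgt him.
Qed.

Lemma loK u : lo (lp u) = u.
Proof.
apply/matrixP => i j; rewrite ord1 mxE modp_small; last by rewrite size_polyXn ltnS size_lp.
by rewrite lpE coef_poly ltn_ord inord_val.
Qed.

Lemma lo_mod q : lo (q %% 'X^m) = lo q.
Proof. by apply/matrixP => i j; rewrite !mxE modp_id. Qed.

Lemma lo_eq q r : q %% 'X^m = r %% 'X^m -> lo q = lo r.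
Proof. by move=> e; rewrite -lo_mod e lo_mod. Qed.

Lemma loD q r : lo (q + r) = lo q + lo r.
Proof. by apply/matrixP => i j; rewrite !mxE modpD coefD. Qed.

Lemma loZ c q : lo (c *: q) = c *: lo q.
Proof. by apply/matrixP => i j; rewrite !mxE modpZl coefZ. Qed.

Lemma lo0 : lo 0 = 0.
Proof. by apply/matrixP => i j; rewrite !mxE mod0p coef0. Qed.

Lemma loN q : lo (- q) = - lo q.
Proof. by apply/matrixP => i j; rewrite !mxE modpN coefN. Qed.

Lemma loB q r : lo (q - r) = lo q - lo r.
Proof. by rewrite loD loN. Qed.

Lemma lo_sum I (r : seq I) (P : pred I) (F : I -> {poly k}) :
  lo (\sum_(i <- r | P i) F i) = \sum_(i <- r | P i) lo (F i).
Proof. by apply: (big_morph _ loD lo0). Qed.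

Lemma lpD u v : lp (u + v) = lp u + lp v.
Proof. by rewrite /lam_poly -big_split; apply: eq_bigr => i _; rewrite mxE scalerDl. Qed.

Lemma lpZ c u : lp (c *: u) = c *: lp u.
Proof. by rewrite /lam_poly scaler_sumr; apply: eq_bigr => i _; rewrite mxE scalerA. Qed.

Lemma lo_mul q r : lo (q %% 'X^m * (r %% 'X^m)) = lo (q * r).
Proof. by apply: lo_eq; rewrite modp_mul mulrC modp_mul mulrC. Qed.

Lemma lam_mulE q r : lam_mul (lo q) (lo r) = lo (q * r).
Proof. by rewrite /lam_mul !lpK lo_mul. Qed.

Lemma lo_eq0 q : lo q = 0 -> q %% 'X^m = 0.
Proof. by move=> e; rewrite -lpK e -[0](lo0) lpK mod0p. Qed.

Lemma mx_ext (A B : 'M[k]_m) : (forall u, A *m u = B *m u) -> A = B.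
Proof.
move=> h; apply/matrixP => i j.
by have /matrixP/(_ i 0) := h (delta_mx j 0); rewrite -!colE !mxE.
Qed.


Lemma lo_modl a b : lo ((a %% 'X^m) * b) = lo (a * b).
Proof. by apply: lo_eq; rewrite mulrC modp_mul mulrC. Qed.

Lemma lo_modr a b : lo (a * (b %% 'X^m)) = lo (a * b).
Proof. by apply: lo_eq; rewrite modp_mul. Qed.

Lemma lam_mulC u v : lam_mul u v = lam_mul v u.
Proof. by rewrite /lam_mul mulrC. Qed.

Lemma AdE (D : 'M[k]_m) : Ad D <-> D = 0.
Proof.
split=> [[x hx]|->]; last by exists 0 => u; rewrite mul0mx lam_mulC subrr.
by apply: mx_ext => u; rewrite hx lam_mulC subrr mul0mx.
Qed.

Lemma deriv_sum I (s : seq I) (P : pred I) (F : I -> {poly k}) :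
  (\sum_(i <- s | P i) F i)^`() = \sum_(i <- s | P i) (F i)^`().
Proof. by apply: (big_morph _ (@derivD _) (@deriv0 _)). Qed.

Definition psi q : 'M[k]_m := \matrix_(i, j) lo (('X^j)^`() * q) i 0.

Lemma psiE q u : psi q *m u = lo ((lp u)^`() * q).
Proof.
rewrite /lam_poly deriv_sum mulr_suml lo_sum.
under eq_bigr do rewrite derivZ -scalerAl loZ.
apply/matrixP => i z; rewrite ord1 !mxE summxE; apply: eq_bigr => j _.
by rewrite !mxE mulrC.
Qed.

Lemma psi_mod q : psi (q %% 'X^m) = psi q.
Proof. by apply: mx_ext => u; rewrite !psiE lo_modr. Qed.

Lemma psiD q r : psi (q + r) = psi q + psi r.
Proof. by apply: mx_ext => u; rewrite mulmxDl !psiE mulrDr loD. Qed.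

Lemma psiZ c q : psi (c *: q) = c *: psi q.
Proof. by apply: mx_ext => u; rewrite -scalemxAl !psiE -scalerAr loZ. Qed.

Lemma psi0 : psi 0 = 0.
Proof. by apply: mx_ext => u; rewrite psiE mulr0 lo0 mul0mx. Qed.

Lemma psiN q : psi (- q) = - psi q.
Proof. by rewrite -scaleN1r psiZ scaleN1r. Qed.

Lemma psiB q r : psi (q - r) = psi q - psi r.
Proof. by rewrite psiD psiN. Qed.

Lemma psi_sum I (s : seq I) (P : pred I) (F : I -> {poly k}) :
  psi (\sum_(i <- s | P i) F i) = \sum_(i <- s | P i) psi (F i).
Proof. by apply: (big_morph _ psiD psi0). Qed.

Lemma psi_Xm q : psi ('X^m * q) = 0.
Proof. by rewrite -psi_mod mulrC modp_mull psi0. Qed.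

Hypothesis hm0 : (m%:R : k) = 0.

Lemma deriv_mod q : (q %% 'X^m)^`() %% 'X^m = q^`() %% 'X^m.
Proof.
have hX : ('X^(m.-1) *+ m : {poly k}) = 0.
  by rewrite -mulr_natr -(rmorph_nat (@polyC k)) hm0 mulr0.
rewrite {2}(divp_eq q 'X^m) derivD derivM derivXn hX mulr0 addr0.
by rewrite modpD modp_mull add0r.
Qed.

Lemma lo_deriv_mod q f : lo ((q %% 'X^m)^`() * f) = lo (q^`() * f).
Proof. by rewrite -lo_modl deriv_mod lo_modl. Qed.

Lemma Der_psi q : Der (psi q).
Proof.
move=> u v; rewrite /lam_mul !psiE !lpK lo_deriv_mod !lo_modl lo_modr -loD.
by congr lo; rewrite derivM; ring.
Qed.

Lemma psi_br f g : gl_br (psi f) (psi g) = psi (f * g^`() - g * f^`()).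
Proof.
apply: mx_ext => u; rewrite /gl_br mulmxBl -!mulmxA !psiE !lpK !lo_deriv_mod -loB.
by congr lo; rewrite !derivM; ring.
Qed.

Hypothesis hn : (1 <= n)%N.

Definition ex : 'cV[k]_m := lo 'X.

Lemma lp_ex : lp ex = 'X.
Proof. by rewrite lpK modp_small // size_polyX size_polyXn !ltnS. Qed.

Lemma psi_ex q : psi q *m ex = lo q.
Proof. by rewrite psiE lp_ex derivX mul1r. Qed.

Lemma psi_eq0 q : psi q = 0 -> q %% 'X^m = 0.
Proof. by move=> h; apply: lo_eq0; rewrite -psi_ex h mul0mx. Qed.

Lemma Der_psiP (D : 'M[k]_m) : Der D -> D = psi (lp (D *m ex)).
Proof.
move=> hD; set g := lp (D *m ex).
have hg : D *m ex = lo g by rewrite loK.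
have h1 : D *m lo 1 = 0.
  have := hD (lo 1) (lo 1).
  rewrite lam_mulE mulr1 -[D *m lo 1]loK !lam_mulE mulr1 mul1r loK => e.
  by apply: (@addrI _ (D *m lo 1)); rewrite addr0 -e.
have hj j : D *m lo ('X^j) = lo (('X^j)^`() * g).
  elim: j => [|j ih]; first by rewrite expr0 h1 derivC mul0r lo0.
  rewrite exprSr -lam_mulE hD ih hg -/ex -[ex]loK lp_ex !lam_mulE -loD.
  by congr lo; rewrite derivM derivX; ring.
apply: mx_ext => u; rewrite psiE -{1}[u]loK /lam_poly lo_sum mulmx_sumr.
rewrite deriv_sum mulr_suml lo_sum; apply: eq_bigr => j _.
by rewrite loZ -scalemxAr hj derivZ -scalerAl loZ.
Qed.

Lemma Der_psiP' (D : 'M[k]_m) : Der D -> exists g : 'cV[k]_m, D = psi (lp g).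
Proof. by move=> /Der_psiP ->; eexists. Qed.

Lemma DerE (D : 'M[k]_m) : Der D <-> exists q, D = psi q.
Proof.
split=> [/Der_psiP'[g ->]|[q ->]]; [by eexists | exact: Der_psi].
Qed.

End Base.


Section Gen.
Variables (K : fieldType) (V : lmodType K) (br : V -> V -> V).
Implicit Types (S I J D A : V -> Prop).

Lemma brsp_in I J u v : I u -> J v -> brsp br I J (br u v).
Proof. by move=> hu hv S _; apply. Qed.

Lemma brsp_sub I J S : subsp S -> (forall u v, I u -> J v -> S (br u v)) ->
  incl (brsp br I J) S.
Proof. by move=> hS h x; apply. Qed.

Lemma brsp_mono I J I' J' : incl I I' -> incl J J' ->
  incl (brsp br I J) (brsp br I' J').
Proof.
move=> hI hJ x hx S hS h; apply: hx => // u v hu hv; apply: h; [exact: hI|exact: hJ].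
Qed.

Lemma brsp_subsp I J : subsp (brsp br I J).
Proof.
split; first by move=> S [h0 _] _.
by move=> a u v hu hv S hS h; case: (hS) => _ hS2; apply: hS2; [apply: hu|apply: hv].
Qed.

Lemma subsp0 S : subsp S -> S 0. Proof. by case. Qed.
Lemma subspD S u v : subsp S -> S u -> S v -> S (u + v).
Proof. by move=> [_ h] hu hv; have := h 1 u v hu hv; rewrite scale1r. Qed.
Lemma subspZ S a u : subsp S -> S u -> S (a *: u).
Proof. by move=> [h0 h] hu; have := h a u 0 hu h0; rewrite addr0. Qed.

End Gen.

Section Spec.
Variables (k : fieldType) (n : nat).
Local Notation m := n.+1.
Local Notation Dm := (@Der k m).
Local Notation Am := (@Ad k m).
Local Notation br := (@gl_br k m).
Hypothesis hm0 : (m%:R : k) = 0.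
Hypothesis hn : (1 <= n)%N.

Lemma Ad_subsp : subsp Am.
Proof.
split; first by apply/AdE.
by move=> a u v /AdE -> /AdE ->; apply/AdE; rewrite scaler0 addr0.
Qed.

Lemma Der_subsp : subsp Dm.
Proof.
split; first by apply/(DerE hm0 hn); exists 0; rewrite psi0.
move=> a u v /(DerE hm0 hn)[f ->] /(DerE hm0 hn)[g ->]; apply/(DerE hm0 hn).
by exists (a *: f + g); rewrite psiD psiZ.
Qed.

Lemma Der_br u v : Dm u -> Dm v -> Dm (br u v).
Proof.
move=> /(DerE hm0 hn)[f ->] /(DerE hm0 hn)[g ->]; apply/(DerE hm0 hn).
by rewrite psi_br //; eexists.
Qed.

Lemma addsp_Ad X x : subsp X -> (addsp X Am x <-> X x).
Proof.
move=> hX; split=> [[u [v [hu /AdE hv ->]]]|hx]; first by rewrite hv addr0.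
by exists x, 0; split => //; [apply/AdE | rewrite addr0].
Qed.

Lemma brsp_DD : incl (brsp br Dm Dm) Dm.
Proof. apply: brsp_sub; [exact: Der_subsp | exact: Der_br]. Qed.

Lemma simple_semisimple : qsimple br Dm Am -> qsemisimple br Dm Am.
Proof.
move=> [hna hs] I hI [N hN].
case: (hs I hI) => // hDI.
pose J := addsp (brsp br Dm Dm) Am.
have hJ x : J x <-> brsp br Dm Dm x by apply: addsp_Ad; exact: brsp_subsp.
have hJsub : subsp J.
  split; first by apply/hJ; apply: subsp0; exact: brsp_subsp.
  by move=> a u v /hJ hu /hJ hv; apply/hJ; case: (brsp_subsp br Dm Dm) => _; apply.
have hJid : qideal br Dm Am J.
  split => //.
  - by move=> x /AdE ->; apply: subsp0.
  - by move=> x /hJ /brsp_DD.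
  - apply: brsp_sub => // u v hu /hJ hv; apply/hJ; apply: brsp_in => //.
    exact: brsp_DD.
have hDJ : incl Dm J.
  case: (hs J hJid) => // hJA; exfalso; apply: hna => x hx; apply: hJA; exact/hJ.
have hDQ i : incl Dm (qderived br Am I i).
  elim: i => [|i ih] //= x /hDJ [u [v [hu hv ->]]].
  exists u, v; split => //; exact: (brsp_mono ih ih).
exfalso; apply: hna; apply: brsp_sub; first exact: Ad_subsp.
move=> u v /hDQ/hN/AdE -> /hDQ/hN/AdE ->; apply/AdE.
by rewrite /gl_br mul0mx subrr.
Qed.

End Spec.

Section Jsec.
Variables (k : fieldType) (n : nat).
Local Notation m := n.+1.
Local Notation Dm := (@Der k m).
Local Notation Am := (@Ad k m).
Local Notation br := (@gl_br k m).
Hypothesis hm0 : (m%:R : k) = 0.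
Hypothesis hn : (1 <= n)%N.
Variable p : nat.
Hypothesis hp0 : (0 < p)%N.
Hypothesis hmp : (p.*2 <= m)%N.
Hypothesis hmp0 : ((m - p)%:R : k) = 0.
Local Notation r := (m - p)%N.
Implicit Types q : {poly k}.

Definition J : 'M[k]_m -> Prop := fun D => exists q : {poly k}, D = psi n ('X^r * q).

Lemma derXr q : ('X^r * q)^`() = 'X^r * q^`().
Proof.
by rewrite derivM derivXn -mulr_natr -(rmorph_nat (@polyC k)) hmp0 mulr0 !mul0r add0r.
Qed.

Lemma J_subsp : subsp J.
Proof.
split; first by exists 0; rewrite mulr0 psi0.
by move=> a u v [q ->] [q' ->]; exists (a *: q + q'); rewrite mulrDr -scalerAr psiD psiZ.
Qed.

Lemma J_Der : incl J Dm.
Proof. by move=> x [q ->]; exact: Der_psi. Qed.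

Lemma J_ideal u v : Dm u -> J v -> J (br u v).
Proof.
move=> /(DerE hm0 hn)[f ->] [q ->]; rewrite psi_br // derXr.
by exists (f * q^`() - q * f^`()); congr psi; ring.
Qed.

Lemma J_abel u v : J u -> J v -> br u v = 0.
Proof.
move=> [q ->] [q' ->]; rewrite psi_br // !derXr.
have -> : 'X^r * q * ('X^r * q'^`()) - 'X^r * q' * ('X^r * q^`()) =
   'X^m * ('X^(m - p.*2) * (q * q'^`() - q' * q^`())).
  have hX : 'X^m * 'X^(m - p.*2) = 'X^r * 'X^r :> {poly k}.
    by rewrite -!exprD; congr (_ ^+ _); rewrite -addnn; lia.
  by rewrite [RHS]mulrA hX; ring.
exact: psi_Xm.
Qed.

Lemma J_nz : J (psi n ('X^r : {poly k})) /\ psi n ('X^r : {poly k}) <> 0.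
Proof.
split; first by exists 1; rewrite mulr1.
move=> /(psi_eq0 hn); rewrite modp_small ?size_polyXn; last by lia.
by move/eqP; rewrite -size_poly_eq0 size_polyXn.
Qed.

Lemma J_qideal : qideal br Dm Am J.
Proof.
split.
- exact: J_subsp.
- by move=> x /AdE ->; exact: (subsp0 J_subsp).
- exact: J_Der.
- by apply: brsp_sub; [exact: J_subsp | exact: J_ideal].
Qed.

Lemma J_solv : qsolvable br Am J.
Proof.
exists 1%N => x /= [u [v [hu hv ->]]].
have hu0 : Am u.
  move: u hu; apply: brsp_sub; first exact: Ad_subsp.
  by move=> a b ha hb; apply/AdE; exact: J_abel.
by apply: (@subspD _ _ Am) => //; exact: Ad_subsp.
Qed.

End Jsec.

Section Two.
Variables (k : fieldType).
Hypothesis h20 : (2%:R : k) = 0.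
Local Notation Dm := (@Der k 2).
Local Notation Am := (@Ad k 2).
Local Notation br := (@gl_br k 2).

Lemma not_ss2 : ~ qsemisimple br Dm Am.
Proof.
move=> hss.
pose J2 : 'M[k]_2 -> Prop := fun D => exists c : k, D = psi 1 c%:P.
have hbr c d : br (psi 1 c%:P) (psi 1 d%:P) = 0.
  by rewrite psi_br // !derivC !mulr0 subrr psi0.
have hJ : qideal br Dm Am J2.
  have hsub : subsp J2.
    split; first by exists 0; rewrite psi0.
    by move=> a u v [c ->] [d ->]; exists (a * c + d); rewrite -psiZ -psiD polyCD polyCM mul_polyC.
  split => //.
  - by move=> x /AdE ->; exists 0; rewrite psi0.
  - by move=> x [c ->]; exact: Der_psi.
  - apply: brsp_sub => // u v /(Der_psiP' (isT : (1 <= 1)%N))[g ->] [c ->].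
    rewrite psi_br // derivC mulr0 sub0r.
    have hs : (size (lam_poly g)^`() <= 1)%N.
      have [->|nz] := eqVneq (lam_poly g) 0; first by rewrite deriv0 size_poly0.
      by have := lt_size_deriv nz; have := size_lp g; lia.
    by rewrite (size1_polyC hs) -polyCM -polyCN; eexists.
have hsol : qsolvable br Am J2.
  exists 1%N => x /= [u [v [hu hv ->]]].
  have hu0 : Am u.
    move: u hu; apply: brsp_sub; first exact: Ad_subsp.
    by move=> a b [c ->] [d ->]; apply/AdE.
  by apply: (@subspD _ _ Am) => //; exact: Ad_subsp.
have := hss J2 hJ hsol (psi 1 1); rewrite -polyC1.
move/(_ (ex_intro _ 1 erefl))/AdE/(psi_eq0 (isT : (1 <= 1)%N)).
by rewrite modp_small ?polyC1 ?size_polyXn ?size_poly1 //; apply/eqP; rewrite oner_eq0.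
Qed.

End Two.

Section Witt.
Variables (k : fieldType) (n : nat).
Local Notation m := n.+1.
Local Notation Dm := (@Der k m).
Local Notation Am := (@Ad k m).
Local Notation br := (@gl_br k m).
Hypothesis hm0 : (m%:R : k) = 0.
Hypothesis hm3 : (2 < m)%N.
Hypothesis hnz : forall j, (0 < j < m)%N -> (j%:R : k) != 0.
Let hn : (1 <= n)%N. Proof. by case: n hm3 => // [[]]. Qed.
Implicit Types q : {poly k}.

Lemma psi1_nz : psi n (1 : {poly k}) <> 0.
Proof.
move/(psi_eq0 hn); rewrite modp_small ?size_polyXn ?size_poly1 //.
by apply/eqP; rewrite oner_eq0.
Qed.

Lemma witt_simple : qsimple br Dm Am.
Proof.
split.
  move=> h; apply: psi1_nz.
  have := h _ (brsp_in (Der_psi hm0 1) (Der_psi hm0 ('X : {poly k}))) => /AdE.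
  rewrite psi_br // derivX -polyC1 derivC polyC1 mulr0 subr0 mulr1 //.
move=> I [hIs hAI hID hIbr].
have hI u v : Dm u -> I v -> I (br u v) by move=> hu hv; apply: hIbr; exact: brsp_in.
have [[E [hE nE]]|none] := classic (exists E, I E /\ E <> 0); last first.
  left => x hx; apply/AdE; apply: NNPP => nx; apply: none; by exists x.
right.
have step1 : forall (s : nat) (P : {poly k}), P != 0 -> (size P <= s)%N -> (size P <= m)%N -> I (psi n P) ->
    I (psi n 1).
  elim=> [|s ih] P nP hs hsm hP; first by move: nP; rewrite -size_poly_eq0; lia.
  have [hs1|hs2] := leqP (size P) 1.
    have eP := size1_polyC hs1.
    have c0 : P`_0 != 0 by apply: contra_neq nP => h; rewrite eP h.
    have -> : psi n 1 = (P`_0)^-1 *: psi n P.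
      by rewrite {2}(_ : P = P`_0 *: 1) ?psiZ ?scalerA ?mulVf ?scale1r // {1}eP -mul_polyC mulr1.
    exact: subspZ.
  have nP' : P^`() != 0.
    apply/eqP => /(congr1 (fun q => q`_(size P).-2)); rewrite coef_deriv coef0.
    have -> : (size P).-2.+1 = (size P).-1 by lia.
    apply/eqP; rewrite -mulr_natr mulf_neq0 //; first by rewrite -lead_coefE lead_coef_eq0.
    by apply: hnz; lia.
  apply: (ih P^`()) => //.
  - by have := lt_size_deriv nP; lia.
  - by have := lt_size_deriv nP; lia.
  have := hI _ _ (Der_psi hm0 1) hP; rewrite psi_br // -polyC1 derivC polyC1 mulr0 subr0 mul1r //.
have h1 : I (psi n 1).
  move: (hID _ hE) => /(Der_psiP' hn)[g eg].
  have ng : lam_poly g != 0 by apply: contra_notN nE => /eqP e; rewrite eg e psi0.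
  by apply: (step1 m (lam_poly g)) => //; [exact: size_lp | exact: size_lp | rewrite -eg].
have h2 j : (j <= m - 2)%N -> I (psi n 'X^j).
  move=> hj.
  have := hI _ _ (Der_psi hm0 ('X^(j.+1) : {poly k})) h1; rewrite psi_br //.
  have -> : 'X^(j.+1) * (1 : {poly k})^`() - 1 * ('X^(j.+1))^`() = (- (j.+1)%:R) *: 'X^j.
    by rewrite -polyC1 derivC polyC1 mulr0 sub0r mul1r derivXn /= scaleNr scaler_nat.
  move=> h; have := subspZ (- (j.+1)%:R)^-1 hIs h.
  rewrite -psiZ scalerA mulVf ?scale1r //.
  by rewrite oppr_eq0; apply: hnz; lia.
have h3 : I (psi n 'X^(m.-1)).
  have := hI _ _ (Der_psi hm0 ('X^(m.-1) : {poly k})) (h2 1%N ltac:(lia)); rewrite psi_br //.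
  have hn1 : (n%:R : k) = -1 by apply/eqP; rewrite -addr_eq0 -(natrD k n 1) addn1 hm0.
  have -> : 'X^(m.-1) * ('X^1 : {poly k})^`() - 'X^1 * ('X^(m.-1))^`() = 2%:R *: 'X^n.
    rewrite /= expr1 derivX mulr1 derivXn mulrnAr -exprS prednK //.
    by rewrite -scaler_nat hn1 scaleN1r opprK scaler_nat mulr2n.
  move=> h; have := subspZ (2%:R : k)^-1 hIs h.
  rewrite -psiZ scalerA mulVf ?scale1r //.
  by apply: hnz; lia.
have hX j : (j < m)%N -> I (psi n 'X^j).
  move=> hj; have [hj2|hj2] := leqP j (m - 2); first exact: h2.
  by have -> : j = m.-1 by lia.
move=> x /(Der_psiP' hn)[g ->].
rewrite /lam_poly psi_sum; apply: (big_ind I) => //.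
- exact: subsp0.
- by move=> a b ha hb; apply: subspD.
- by move=> i _; rewrite psiZ; apply: subspZ => //; apply: hX.
Qed.

End Witt.


Lemma iso_m_eq (k : fieldType) (n p' : nat) (hm0 : (n.+1%:R : k) = 0) (hn : (1 <= n)%N)
  (hp0 : (p'.+1%:R : k) = 0) (hp3 : (2 < p'.+1)%N)
  (hnz : forall j, (0 < j < p'.+1)%N -> (j%:R : k) != 0)
  (hmp : ((p'.+1).*2 <= n.+1)%N) :
  ~ qiso (@gl_br k n.+1) (@Der k n.+1) (@Ad k n.+1)
         (@gl_br k p'.+1) (@Der k p'.+1) (@zerosp k p'.+1).
Proof.
set p := p'.+1; set m := n.+1.
move=> [f [hf1 hf2 hf3 hf4]].
have hmp0 : ((m - p)%:R : k) = 0 by rewrite natrB ?hm0 ?hp0 ?subr0 //; lia.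
have hbrf u v : Der u -> Der v -> f (gl_br u v) = gl_br (f u) (f v).
  by move=> hu hv; apply/eqP; rewrite -subr_eq0; apply/eqP; apply: hf4.
pose J' : 'M[k]_p -> Prop := fun w => exists u, J p u /\ w = f u.
have hJ's : subsp J'.
  split; first by exists 0; split; [exact: (subsp0 (J_subsp k n p)) | rewrite linear0].
  move=> a _ _ [u [hu ->]] [v [hv ->]]; exists (a *: u + v); split.
    by case: (J_subsp k n p) => _; apply.
  by rewrite linearP.
have hJ' : qideal (@gl_br k p) (@Der k p) (@Ad k p) J'.
  split => //.
  - by move=> x /AdE ->; apply: subsp0.
  - by move=> x [u [hu ->]]; apply: hf1; exact: (J_Der hm0 hu).
  - apply: brsp_sub => // w _ hw [u [hu ->]].
    have [u0 [hu0 /subr0_eq e]] := hf3 w hw.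
    exists (gl_br u0 u); split; first by apply: (J_ideal hm0 hn hmp0).
    by rewrite -e hbrf //; exact: (J_Der hm0 hu).
have [hna hs] := witt_simple hp0 hp3 hnz.
case: (hs J' hJ') => [hA|hD].
  have [hx nx] := J_nz k hn (ltn0Sn p') hmp.
  apply: nx; apply/AdE; apply/(hf2 _ (J_Der hm0 hx)).
  by apply/AdE; apply: hA; exists (psi n ('X^(m - p) : {poly k})).
apply: hna; apply: brsp_sub; first exact: Ad_subsp.
move=> u v /hD [u1 [hu1 ->]] /hD [v1 [hv1 ->]]; apply/AdE.
have d1 := J_Der hm0 hu1; have d2 := J_Der hm0 hv1.
by rewrite -hbrf // (J_abel hm0 hn (ltn0Sn p') hmp hmp0 hu1 hv1) linear0.
Qed.

Theorem proposition3p3 (k : closedFieldType) (p m : nat)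
  (hp : p \in [pchar k]) (hm : (2 <= m)%N) (hpm : (p %| m)%N) :
  [<-> qsimple (@gl_br k m) (@Der k m) (@Ad k m);
       qsemisimple (@gl_br k m) (@Der k m) (@Ad k m);
       m = p /\ (2 < p)%N;
       qiso (@gl_br k m) (@Der k m) (@Ad k m)
            (@gl_br k p) (@Der k p) (@zerosp k p) /\ (2 < p)%N].
Proof.
case: m hm hpm => [|n] // hm hpm.
have hn : (1 <= n)%N by [].
have hpr := pcharf_prime hp.
case: p hp hpm hpr => [|p'] hp hpm hpr //.
have hp0 := pcharf0 hp.
have hm0 : (n.+1%:R : k) = 0 by apply/eqP; rewrite -(dvdn_pcharf hp).
have hnz j : (0 < j < p'.+1)%N -> (j%:R : k) != 0.
  by move=> hj; rewrite -(dvdn_pcharf hp); apply/negP => /dvdn_leq; lia.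
have key : (n.+1 = p'.+1) \/ ((p'.+1).*2 <= n.+1)%N.
  case/dvdnP: hpm => c hc; rewrite hc -mul2n.
  case: c hc => [|[|c]] hc; [by [] | by left; rewrite mul1n | right].
  by rewrite leq_mul2r; apply/orP; right.
have hp1 := prime_gt1 hpr.
tfae.
- exact: simple_semisimple hm0 hn.
- move=> hss; case: key => [e|h2].
    split => //; rewrite ltnNge; apply/negP => hp2.
    have ep : p' = 1%N by lia.
    have en : n = 1%N by lia.
    subst; apply: (not_ss2 hp0 hss).
  exfalso.
  have hmp0 : ((n.+1 - p'.+1)%:R : k) = 0 by rewrite natrB ?hm0 ?hp0 ?subr0 //; lia.
  have [hx nx] := J_nz k hn (ltn0Sn p') h2.
  apply: nx; apply/AdE.
  exact: (hss _ (J_qideal hm0 hn hmp0) (J_solv hm0 hn (ltn0Sn _) h2 hmp0) _ hx).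
- case=> [[e] h3]; subst n; split => //.
  exists idfun; split => //.
  + by move=> u _; rewrite AdE.
  + by move=> w hw; exists w; split => //; rewrite /zerosp subrr.
  + by move=> u v _ _; rewrite /zerosp subrr.
- case=> hiso h3; case: key => [[e]|h2].
    by subst n; exact: witt_simple hm0 h3 hnz.
  by exfalso; exact: iso_m_eq hm0 hn hp0 h3 hnz h2 hiso.
Qed.
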